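(* Let $\mathcal{I}\in\mathrm{Ins}(\Omega,\mathcal{H},\mathcal{K})$ be an instrument, $\mathsf{B}\in\mathcal{O}(\Lambda,\mathcal{H})$ a POVM and $\mathcal{J}^{\mathsf{B}}\in\mathrm{Ins}(\Lambda,\mathcal{H},\mathcal{V})$ a measure-and-prepare instrument which measures $\mathsf{B}$. Then $\mathcal{I}$ and $\mathcal{J}^{\mathsf{B}}$ are compatible if and only if $\mathcal{I}\preceq\mathcal{I}^{\mathsf{B}}$, where $\mathcal{I}^{\mathsf{B}}$ is the Lüders instrument of $\mathsf{B}$.
   Context: All Hilbert spaces are finite-dimensional and complex, and all outcome sets are finite. A POVM $\mathsf{B}\in\mathcal{O}(\Lambda,\mathcal{H})$ is a map $y\mapsto\mathsf{B}(y)$ to positive operators with $\sum_y\mathsf{B}(y)=I$. An instrument $\mathcal{I}\in\mathrm{Ins}(\Omega,\mathcal{H},\mathcal{K})$ is a family $(\mathcal{I}_x)_{x\in\Omega}$ of completely positive trace-nonincreasing linear maps $\mathcal{L}(\mathcal{H})\to\mathcal{L}(\mathcal{K})$ whose sum is trace preserving. $\mathcal{J}^{\mathsf{B}}$ measure-and-prepare measuring $\mathsf{B}$ means $\mathcal{J}^{\mathsf{B}}_y(\varrho)=\mathrm{tr}[\mathsf{B}(y)\varrho]\xi_y$ for some states $\{\xi_y\}_{y\in\Lambda}$ on $\mathcal{V}$. The Lüders instrument is $\mathcal{I}^{\mathsf{B}}\in\mathrm{Ins}(\Lambda,\mathcal{H},\mathcal{H})$, $\mathcal{I}^{\mathsf{B}}_y(\varrho)=\sqrt{\mathsf{B}(y)}\varrho\sqrt{\mathsf{B}(y)}$.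 Postprocessing: $\mathcal{I}\preceq\mathcal{I}^{\mathsf{B}}$ if there exist instruments $\mathcal{R}^{(y)}\in\mathrm{Ins}(\Omega,\mathcal{H},\mathcal{K})$, $y\in\Lambda$, with $\mathcal{I}_x=\sum_y\mathcal{R}^{(y)}_x\circ\mathcal{I}^{\mathsf{B}}_y$ for all $x$. Two instruments $\mathcal{I}\in\mathrm{Ins}(\Omega,\mathcal{H},\mathcal{K})$, $\mathcal{J}\in\mathrm{Ins}(\Lambda,\mathcal{H},\mathcal{V})$ are compatible if there is $\mathcal{G}\in\mathrm{Ins}(\Omega\times\Lambda,\mathcal{H},\mathcal{K}\otimes\mathcal{V})$ with $\sum_{x}\mathrm{tr}_{\mathcal{K}}[\mathcal{G}_{(x,y)}(\varrho)]=\mathcal{J}_y(\varrho)$ for all $y$ and $\sum_y\mathrm{tr}_{\mathcal{V}}[\mathcal{G}_{(x,y)}(\varrho)]=\mathcal{I}_x(\varrho)$ for all $x$, for all states $\varrho$. *)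

(* Defs.v *)
From mathcomp Require Import all_boot all_algebra.
From mathcomp Require Import reals.
From mathcomp Require Import complex mxtens.

Set Implicit Arguments.
Unset Strict Implicit.
Unset Printing Implicit Defensive.

Import GRing.Theory Num.Theory.
Local Open Scope ring_scope.

Section QuantumDefs.
Variable C : numClosedFieldType.

(* Hilbert space C^n ; L(C^n) = 'M[C]_n. *)

Definition adjmx {p q : nat} (A : 'M[C]_(p, q)) : 'M[C]_(q, p) :=
  (map_mx Num.conj A)^T.

Definition psdmx {n : nat} (A : 'M[C]_n) : Prop :=
  A = adjmx A /\ forall v : 'cV[C]_n, 0 <= (adjmx v *m A *m v) 0 0.

Definition is_state {n : nat} (rho : 'M[C]_n) : Prop :=
  psdmx rho /\ \tr rho = 1.

Definition is_povm {Lam : finType} {n : nat} (B : Lam -> 'M[C]_n) : Prop :=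
  (forall y, psdmx (B y)) /\ \sum_(y : Lam) B y = 1%:M.

Definition is_linear_map {n m : nat} (f : 'M[C]_n -> 'M[C]_m) : Prop :=
  forall (a : C) (A B : 'M[C]_n), f (a *: A + B) = a *: f A + f B.

(* C^k (x) C^n is C^(k*n), with the index convention of tensmx
   (mxtens_index (i, a) = i * n + a). *)
Definition blockmx {k n : nat} (X : 'M[C]_(k * n)) (i j : 'I_k) : 'M[C]_n :=
  \matrix_(a, b) X (mxtens_index (i, a)) (mxtens_index (j, b)).

(* the ampliation id_{M_k} (x) f *)
Definition ampl (k : nat) {n m : nat} (f : 'M[C]_n -> 'M[C]_m)
    (X : 'M[C]_(k * n)) : 'M[C]_(k * m) :=
  \sum_(i < k) \sum_(j < k) (delta_mx i j *t f (blockmx X i j)).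
Arguments ampl k {n m} f X.

Definition is_cp {n m : nat} (f : 'M[C]_n -> 'M[C]_m) : Prop :=
  forall (k : nat) (X : 'M[C]_(k * n)), psdmx X -> psdmx (ampl k f X).

Definition is_instrument {Om : finType} {n m : nat}
    (I : Om -> 'M[C]_n -> 'M[C]_m) : Prop :=
  [/\ forall x, is_linear_map (I x),
      forall x, is_cp (I x),
      forall x (rho : 'M[C]_n), psdmx rho -> \tr (I x rho) <= \tr rho
    & forall A : 'M[C]_n, \tr (\sum_(x : Om) I x A) = \tr A].

Definition is_measure_and_prepare {Lam : finType} {n v : nat}
    (B : Lam -> 'M[C]_n) (J : Lam -> 'M[C]_n -> 'M[C]_v) : Prop :=
  exists xi : Lam -> 'M[C]_v,
    (forall y, is_state (xi y)) /\
    (forall y (A : 'M[C]_n), J y A = \tr (B y *m A) *: xi y).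

Definition is_psd_sqrt {n : nat} (S A : 'M[C]_n) : Prop :=
  psdmx S /\ S *m S = A.

(* Lueders instrument of B, given sqrtB y = sqrt (B y) *)
Definition luders {Lam : finType} {n : nat} (sqrtB : Lam -> 'M[C]_n)
    (y : Lam) (rho : 'M[C]_n) : 'M[C]_n :=
  sqrtB y *m rho *m sqrtB y.

Definition postprocessing {Om Lam : finType} {n m : nat}
    (I : Om -> 'M[C]_n -> 'M[C]_m) (L : Lam -> 'M[C]_n -> 'M[C]_n) : Prop :=
  exists Rr : Lam -> Om -> 'M[C]_n -> 'M[C]_m,
    (forall y, is_instrument (Rr y)) /\
    (forall x (A : 'M[C]_n), I x A = \sum_(y : Lam) Rr y x (L y A)).

Definition ptrace2 {m v : nat} (Y : 'M[C]_(m * v)) : 'M[C]_m :=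
  \matrix_(a, b) \sum_(c < v) Y (mxtens_index (a, c)) (mxtens_index (b, c)).
Definition ptrace1 {m v : nat} (Y : 'M[C]_(m * v)) : 'M[C]_v :=
  \matrix_(c, d) \sum_(a < m) Y (mxtens_index (a, c)) (mxtens_index (a, d)).

Definition compatible {Om Lam : finType} {n m v : nat}
    (I : Om -> 'M[C]_n -> 'M[C]_m) (J : Lam -> 'M[C]_n -> 'M[C]_v) : Prop :=
  exists G : (Om * Lam)%type -> 'M[C]_n -> 'M[C]_(m * v),
    [/\ is_instrument G,
        forall (rho : 'M[C]_n), is_state rho -> forall y : Lam,
          \sum_(x : Om) ptrace1 (G (x, y) rho) = J y rho
      & forall (rho : 'M[C]_n), is_state rho -> forall x : Om,
          \sum_(y : Lam) ptrace2 (G (x, y) rho) = I x rho].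

End QuantumDefs.

(* Main.v *)
Require Import Defs.
From mathcomp Require Import all_boot all_algebra.
From mathcomp Require Import reals.
From mathcomp Require Import complex mxtens.
From mathcomp Require Import all_order.
Local Open Scope ring_scope.

Set Implicit Arguments.
Unset Strict Implicit.
Unset Printing Implicit Defensive.

Module Aux.
Import GRing.Theory Num.Theory Order.TTheory.
Local Open Scope ring_scope.


Section Basic.
Variable C : numClosedFieldType.
Implicit Types (a b c : C).

Lemma adjmxE p q (A : 'M[C]_(p, q)) i j : adjmx A i j = (A j i)^*.
Proof. by rewrite !mxE. Qed.

Lemma adjmxK p q (A : 'M[C]_(p, q)) : adjmx (adjmx A) = A.
Proof. by apply/matrixP=> i j; rewrite !adjmxE conjCK. Qed.

Lemma adjmxM p q r (A : 'M[C]_(p, q)) (B : 'M[C]_(q, r)) :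
  adjmx (A *m B) = adjmx B *m adjmx A.
Proof.
apply/matrixP=> i j; rewrite adjmxE !mxE rmorph_sum; apply: eq_bigr=> k _.
by rewrite !adjmxE rmorphM mulrC.
Qed.

Lemma adjmxD p q (A B : 'M[C]_(p, q)) : adjmx (A + B) = adjmx A + adjmx B.
Proof. by apply/matrixP=> i j; rewrite !mxE rmorphD. Qed.

Lemma adjmxN p q (A : 'M[C]_(p, q)) : adjmx (- A) = - adjmx A.
Proof. by apply/matrixP=> i j; rewrite !mxE rmorphN. Qed.

Lemma adjmxB p q (A B : 'M[C]_(p, q)) : adjmx (A - B) = adjmx A - adjmx B.
Proof. by rewrite adjmxD adjmxN. Qed.

Lemma adjmxZ p q a (A : 'M[C]_(p, q)) : adjmx (a *: A) = a^* *: adjmx A.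
Proof. by apply/matrixP=> i j; rewrite !mxE rmorphM. Qed.

Lemma adjmx0 p q : adjmx (0 : 'M[C]_(p, q)) = 0.
Proof. by apply/matrixP=> i j; rewrite !mxE rmorph0. Qed.

Lemma adjmx1 p : adjmx (1%:M : 'M[C]_p) = 1%:M.
Proof. by apply/matrixP=> i j; rewrite !mxE eq_sym; case: eqP; rewrite ?rmorph1 ?rmorph0. Qed.

Lemma adjmx_sum p q (I : finType) (F : I -> 'M[C]_(p, q)) :
  adjmx (\sum_i F i) = \sum_i adjmx (F i).
Proof.
apply/matrixP=> i j; rewrite adjmxE !summxE rmorph_sum.
by apply: eq_bigr=> k _; rewrite adjmxE.
Qed.

Lemma tr_adjmx p (A : 'M[C]_p) : \tr (adjmx A) = (\tr A)^*.
Proof. by rewrite /mxtrace rmorph_sum; apply: eq_bigr=> i _; rewrite adjmxE. Qed.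

Definition quad n (A : 'M[C]_n) (w : 'cV[C]_n) : C := (adjmx w *m A *m w) 0 0.

Lemma quadD n (A B : 'M[C]_n) w : quad (A + B) w = quad A w + quad B w.
Proof. by rewrite /quad mulmxDr mulmxDl mxE. Qed.

Lemma quadZ n a (A : 'M[C]_n) w : quad (a *: A) w = a * quad A w.
Proof. by rewrite /quad -scalemxAr -scalemxAl mxE. Qed.

Lemma quad0 n w : quad (0 : 'M[C]_n) w = 0.
Proof. by rewrite /quad mulmx0 mul0mx mxE. Qed.

Lemma quad_sum n (I : finType) (F : I -> 'M[C]_n) w :
  quad (\sum_i F i) w = \sum_i quad (F i) w.
Proof. by rewrite /quad mulmx_sumr mulmx_suml summxE. Qed.

Lemma quad_conj n p (M : 'M[C]_(p, n)) (A : 'M[C]_n) w :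
  quad (M *m A *m adjmx M) w = quad A (adjmx M *m w).
Proof. by rewrite /quad adjmxM adjmxK !mulmxA. Qed.

Lemma psd0 n : psdmx (0 : 'M[C]_n).
Proof. by split; [rewrite adjmx0|move=> v; rewrite -/(quad _ _) quad0]. Qed.

Lemma psdD n (A B : 'M[C]_n) : psdmx A -> psdmx B -> psdmx (A + B).
Proof.
move=> [hA pA] [hB pB]; split; first by rewrite adjmxD -hA -hB.
by move=> v; rewrite -/(quad _ _) quadD; apply: addr_ge0; [apply: pA|apply: pB].
Qed.

Lemma psdZ n a (A : 'M[C]_n) : 0 <= a -> psdmx A -> psdmx (a *: A).
Proof.
move=> a0 [hA pA]; split; first by rewrite adjmxZ -hA conj_Creal ?ger0_real.
by move=> v; rewrite -/(quad _ _) quadZ; apply: mulr_ge0 => //; apply: pA.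
Qed.

Lemma psd_sum n (I : finType) (F : I -> 'M[C]_n) :
  (forall i, psdmx (F i)) -> psdmx (\sum_i F i).
Proof.
by move=> H; apply: (big_ind (@psdmx C n)) => //; [exact: psd0|move=> *; exact: psdD].
Qed.

Lemma psd_conj n p (M : 'M[C]_(p, n)) (A : 'M[C]_n) :
  psdmx A -> psdmx (M *m A *m adjmx M).
Proof.
move=> [hA pA]; split; first by rewrite !adjmxM adjmxK -hA mulmxA.
by move=> v; rewrite -/(quad _ _) quad_conj; apply: pA.
Qed.

Lemma psd_herm n (A : 'M[C]_n) : psdmx A -> adjmx A = A.
Proof. by case=> hA _; rewrite -hA. Qed.

Lemma adj_delta p q (i : 'I_p) (j : 'I_q) : adjmx (delta_mx i j : 'M[C]_(p, q)) = delta_mx j i.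
Proof.
apply/matrixP=> a b; rewrite !mxE andbC; by case: (_ && _); rewrite ?rmorph1 ?rmorph0.
Qed.

Lemma quad_delta n (A : 'M[C]_n) (i j : 'I_n) :
  (adjmx (delta_mx i (0 : 'I_1)) *m A *m delta_mx j (0 : 'I_1)) 0 0 = A i j.
Proof. by rewrite adj_delta -rowE -colE !mxE. Qed.

Lemma psd_diag n (A : 'M[C]_n) i : psdmx A -> 0 <= A i i.
Proof. by case=> _ /(_ (delta_mx i 0)); rewrite quad_delta. Qed.

Lemma psd_tr_ge0 n (A : 'M[C]_n) : psdmx A -> 0 <= \tr A.
Proof. by move=> pA; apply: sumr_ge0 => i _; apply: psd_diag. Qed.

Lemma quad_lin n (A : 'M[C]_n) u w c :
  quad A (u + c *: w) = quad A u + c * (adjmx u *m A *m w) 0 0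
     + c^* * (adjmx w *m A *m u) 0 0 + c^* * c * quad A w.
Proof.
rewrite /quad adjmxD adjmxZ !mulmxDl !mulmxDr.
by rewrite -!scalemxAl -!scalemxAr !mxE !addrA mulrA.
Qed.

Lemma quad_zero n (A : 'M[C]_n) : (forall w, quad A w = 0) -> A = 0.
Proof.
move=> H.
have Hd : forall i, A i i = 0 by move=> i; rewrite -quad_delta; apply: H.
apply/matrixP=> i j; rewrite mxE.
have := H (delta_mx i 0 + 1 *: delta_mx j 0).
have := H (delta_mx i 0 + 'i *: delta_mx j 0).
rewrite !quad_lin /quad !quad_delta !Hd !mulr0 !addr0 add0r conjCi rmorph1 !mul1r.
move=> h1 h2.
have e : A i j = A j i.
  have : 'i * (A i j - A j i) = 0 by rewrite mulrBr -h1 mulNr.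
  by move/eqP; rewrite mulf_eq0 (negbTE (neq0Ci _)) /= subr_eq0 => /eqP.
move: h2; rewrite add0r -e -mulr2n => /eqP; rewrite mulrn_eq0 /= => /eqP //.
Qed.
End Basic.


Section Spec.
Variable C : numClosedFieldType.

Lemma adjmx_tC p q (A : 'M[C]_(p, q)) : adjmx A = map_mx Num.conj (A ^T).
Proof. by apply/matrixP=> i j; rewrite !mxE. Qed.

Variable n : nat.
Variable A : 'M[C]_n.
Hypothesis pA : psdmx A.

Let U := spectralmx A.
Let d := spectral_diag A.

Lemma UU : U *m adjmx U = 1%:M.
Proof. by rewrite adjmx_tC; apply/unitarymxP; apply: spectral_unitarymx. Qed.

Lemma UU' : adjmx U *m U = 1%:M.
Proof.
rewrite adjmx_tC -[map_mx _ _]mul1mx; apply: mulmxKtV => //; apply: spectral_unitarymx.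
Qed.

Lemma Adecomp : A = adjmx U *m diag_mx d *m U.
Proof.
have nA : A \is normalmx.
  apply/normalmxP; rewrite -adjmx_tC; by rewrite psd_herm.
move/orthomx_spectralP: nA => eA.
rewrite [LHS]eA invmx_unitary ?spectral_unitarymx //.
by rewrite adjmx_tC.
Qed.

Lemma d_ge0 i : 0 <= d 0 i.
Proof.
case: pA => _ /(_ (adjmx U *m delta_mx i 0)); rewrite -/(quad _ _) -quad_conj.
rewrite {1}Adecomp !mulmxA UU mul1mx -mulmxA UU mulmx1.
by rewrite /quad adj_delta -rowE -colE !mxE eqxx mulr1n.
Qed.

Definition sfun (f : C -> C) : 'M[C]_n := adjmx U *m diag_mx (map_mx f d) *m U.

Lemma sfunM f g : sfun f *m sfun g = sfun (fun x => f x * g x).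
Proof.
rewrite /sfun !mulmxA -[_ *m U *m adjmx U]mulmxA UU mulmx1 -[_ *m diag_mx _ *m diag_mx _]mulmxA.
by rewrite mulmx_diag; congr (_ *m _ *m _); congr diag_mx; apply/rowP=> j; rewrite !mxE.
Qed.

Lemma sfun_adj f : adjmx (sfun f) = sfun (fun x => (f x)^*).
Proof.
rewrite /sfun !adjmxM adjmxK mulmxA; congr (_ *m _ *m _).
by apply/matrixP=> i j; rewrite !mxE rmorphMn eq_sym; case: eqP => [->|]; rewrite ?mulr0n.
Qed.

Lemma sfun_ext f g : (forall x, 0 <= x -> f x = g x) -> sfun f = sfun g.
Proof.
move=> H; rewrite /sfun; congr (_ *m diag_mx _ *m _); apply/rowP=> j.
by rewrite !mxE H // d_ge0.
Qed.

Lemma sfun_id : sfun id = A.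
Proof. by rewrite /sfun map_mx_id // -Adecomp. Qed.

Lemma sfun_idE f : (forall x, 0 <= x -> f x = x) -> sfun f = A.
Proof. by move=> H; rewrite -sfun_id; apply: sfun_ext. Qed.

End Spec.

Section PsdFacts.
Variable C : numClosedFieldType.

Lemma psd_factor n (A : 'M[C]_n) : psdmx A -> exists K : 'M[C]_n, A = K *m adjmx K.
Proof.
move=> pA; exists (sfun A sqrtC).
rewrite sfun_adj sfunM; symmetry; apply: sfun_idE => // x x0.
by rewrite conj_Creal ?ger0_real ?sqrtC_ge0 // -expr2 sqrtCK.
Qed.

Lemma psd_tr0 n (A : 'M[C]_n) : psdmx A -> \tr A = 0 -> A = 0.
Proof.
move=> /psd_factor [K ->] t0.
have tE : \tr (K *m adjmx K) = \sum_i \sum_j K i j * (K i j)^*.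
  by rewrite /mxtrace; apply: eq_bigr=> k _; rewrite mxE; apply: eq_bigr=> l _; rewrite adjmxE.
rewrite tE in t0.
have K0 : K = 0.
  apply/matrixP=> i j; rewrite mxE.
  have e := @psumr_eq0P _ _ predT (fun i => \sum_j K i j * (K i j)^*).
  have {}e := e (fun k _ => sumr_ge0 _ (fun l _ => mul_conjC_ge0 (K k l))) t0 i isT.
  have := @psumr_eq0P _ _ predT (fun j => K i j * (K i j)^*) (fun k _ => mul_conjC_ge0 _) e j isT.
  by move=> /eqP; rewrite mul_conjC_eq0 => /eqP.
by rewrite K0 mul0mx.
Qed.

End PsdFacts.


Section Span.
Variable C : numClosedFieldType.

Lemma psd1 n : psdmx (1%:M : 'M[C]_n).
Proof.
split; first by rewrite adjmx1.
move=> v; rewrite mulmx1 mxE; apply: sumr_ge0 => i _; rewrite adjmxE mulrC.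
exact: mul_conjC_ge0.
Qed.

Lemma psd_rank1 n (w : 'cV[C]_n) : psdmx (w *m adjmx w).
Proof. by have := psd_conj w (psd1 1); rewrite mulmx1. Qed.

Lemma rank1_lin n (u w : 'cV[C]_n) c :
  (u + c *: w) *m adjmx (u + c *: w) = u *m adjmx u + c^* *: (u *m adjmx w)
     + c *: (w *m adjmx u) + (c * c^*) *: (w *m adjmx w).
Proof.
by rewrite adjmxD adjmxZ !mulmxDl !mulmxDr -!scalemxAl -!scalemxAr scalerA !addrA.
Qed.

Lemma span_states n (V : lmodType C) (h : 'M[C]_n -> V) :
  (forall a A B, h (a *: A + B) = a *: h A + h B) ->
  (forall rho, is_state rho -> h rho = 0) -> forall A, h A = 0.
Proof.
move=> lin hs.
have h0 : h 0 = 0.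
  have := lin 1 0 0; rewrite scaler0 addr0 scale1r => e.
  by apply: (@addrI _ (h 0)); rewrite addr0 -e.
have hD : forall A B, h (A + B) = h A + h B by move=> A B; have := lin 1 A B; rewrite !scale1r.
have hZ : forall a A, h (a *: A) = a *: h A by move=> a A; have := lin a A 0; rewrite !addr0 h0 addr0.
have hp : forall rho, psdmx rho -> h rho = 0.
  move=> rho prho; have [t0|tn0] := eqVneq (\tr rho) 0.
    by rewrite (psd_tr0 prho t0).
  have -> : rho = \tr rho *: ((\tr rho)^-1 *: rho) by rewrite scalerA mulfV // scale1r.
  rewrite hZ hs ?scaler0 //; split.
    by apply: psdZ => //; rewrite invr_ge0; apply: psd_tr_ge0.
  by rewrite mxtraceZ mulVf.
have hr : forall w : 'cV[C]_n, h (w *m adjmx w) = 0 by move=> w; apply/hp/psd_rank1.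
have hd : forall a b, h (delta_mx a b) = 0.
  move=> a b.
  have E : forall a' b' : 'I_n, (delta_mx a' 0 : 'cV[C]_n) *m adjmx (delta_mx b' 0) = delta_mx a' b'.
    by move=> a' b'; rewrite adj_delta mul_delta_mx.
  have key : forall c, c^* *: h (delta_mx a b) + c *: h (delta_mx b a) = 0.
    move=> c; have := hr (delta_mx a 0 + c *: delta_mx b 0).
    by rewrite rank1_lin !hD !hZ !hr !E scaler0 !addr0 add0r.
  have k1 := key 1; have ki := key 'i.
  rewrite rmorph1 !scale1r in k1; rewrite conjCi in ki.
  have e : h (delta_mx b a) = - h (delta_mx a b) by apply/eqP; rewrite -addr_eq0 addrC k1.
  rewrite e scalerN -scaleNr -scalerDl in ki.
  have nz : - 'i + - 'i != 0 :> C by rewrite -opprD oppr_eq0 -mulr2n mulrn_eq0 /= neq0Ci.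
  by rewrite -[h _]scale1r -(mulVf nz) -scalerA ki scaler0.
move=> A; rewrite (matrix_sum_delta A).
rewrite (big_morph h hD h0) big1 // => i _; rewrite (big_morph h hD h0) big1 // => j _.
by rewrite hZ hd scaler0.
Qed.

End Span.


Section Tens.
Variable C : numClosedFieldType.

Lemma idx_eq m v (x y : 'I_m * 'I_v) :
  (mxtens_index x == mxtens_index y) = (x == y).
Proof. exact: (inj_eq (can_inj (@mxtens_indexK m v))). Qed.

Lemma sum_tens (V : nmodType) m v (F : 'I_(m * v) -> V) :
  \sum_p F p = \sum_(a < m) \sum_(c < v) F (mxtens_index (a, c)).
Proof.
rewrite pair_big /= (reindex (@mxtens_index m v)) /=; last first.
  by exists (@mxtens_unindex m v) => x _; rewrite (mxtens_indexK, mxtens_unindexK).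
by apply: eq_bigr => -[a c].
Qed.

Lemma sum_deltal (T : finType) (p0 : T) (F : T -> C) :
  \sum_p (p == p0)%:R * F p = F p0.
Proof.
rewrite (bigD1 p0) //= eqxx mul1r big1 ?addr0 // => p /negbTE ->; exact: mul0r.
Qed.

Lemma sum_deltar (T : finType) (p0 : T) (F : T -> C) :
  \sum_p F p * (p == p0)%:R = F p0.
Proof. by rewrite -[RHS]sum_deltal; apply: eq_bigr => p _; rewrite mulrC. Qed.

Lemma sum_deltaZ (V : lmodType C) (T : finType) (p0 : T) (F : T -> V) :
  \sum_p (p == p0)%:R *: F p = F p0.
Proof.
rewrite (bigD1 p0) //= eqxx scale1r big1 ?addr0 // => p /negbTE ->; exact: scale0r.
Qed.

Definition Esel k n (i : 'I_k) : 'M[C]_(k * n, n) :=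
  \matrix_(p, a) (p == mxtens_index (i, a))%:R.

Lemma adjEselE k n (i : 'I_k) a p : adjmx (@Esel k n i) a p = (p == mxtens_index (i, a))%:R.
Proof. by rewrite !mxE rmorph_nat. Qed.

Lemma EselM k n (i j : 'I_k) :
  adjmx (@Esel k n i) *m Esel n j = (i == j)%:R *: 1%:M.
Proof.
apply/matrixP=> a b; rewrite !mxE.
under eq_bigr do rewrite adjEselE mxE.
rewrite sum_deltal idx_eq xpair_eqE.
by case: (i == j); rewrite ?mul1r ?mul0r.
Qed.

Lemma EselYE k n p (i i' : 'I_k) a (Y : 'M[C]_(n, p)) b :
  (Esel n i *m Y) (mxtens_index (i', a)) b = (i' == i)%:R * Y a b.
Proof.
rewrite mxE; under eq_bigr do rewrite mxE idx_eq xpair_eqE.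
case: (i' == i) => /=; last by rewrite mul0r big1 // => c _; rewrite mul0r.
by rewrite mul1r; under eq_bigr do rewrite eq_sym; rewrite sum_deltal.
Qed.

Lemma YEselE k n p (j j' : 'I_k) a (Y : 'M[C]_(p, n)) b :
  (Y *m adjmx (Esel n j)) a (mxtens_index (j', b)) = Y a b * (j' == j)%:R.
Proof.
rewrite mxE; under eq_bigr do rewrite adjEselE idx_eq xpair_eqE.
case: (j' == j) => /=; last by rewrite mulr0 big1 // => c _; rewrite mulr0.
by rewrite mulr1; under eq_bigr do rewrite eq_sym; rewrite sum_deltar.
Qed.

Lemma blockmxE k n (X : 'M[C]_(k * n)) i j :
  blockmx X i j = adjmx (Esel n i) *m X *m Esel n j.
Proof.
apply/matrixP=> a b; rewrite [LHS]mxE [RHS]mxE.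
under eq_bigr do rewrite [Esel _ _ _ _]mxE.
rewrite sum_deltar mxE.
by under eq_bigr do rewrite adjEselE; rewrite sum_deltal.
Qed.

Lemma tens_delta k n (i j : 'I_k) (Y : 'M[C]_n) :
  delta_mx i j *t Y = Esel n i *m Y *m adjmx (Esel n j).
Proof.
apply/matrixP=> p q.
case: (mxtens_indexP p) => i' a; case: (mxtens_indexP q) => j' b.
rewrite tensmxE YEselE EselYE mxE.
by case: (i' == i); case: (j' == j); rewrite /= ?mul1r ?mulr1 ?mul0r ?mulr0.
Qed.

Lemma Esel_sum k n : \sum_(i < k) Esel n i *m adjmx (Esel n i) = 1%:M :> 'M[C]_(k * n).
Proof.
apply/matrixP=> p q; rewrite summxE mxE.
under eq_bigr do rewrite mxE.
under eq_bigr do under eq_bigr do rewrite mxE adjEselE.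
have := sum_tens (fun r => (p == r)%:R * (q == r)%:R : C); rewrite /= => <-.
by under eq_bigr do rewrite eq_sym; rewrite sum_deltal eq_sym.
Qed.

End Tens.
Arguments Esel {C k} n i.


Section CP.
Variable C : numClosedFieldType.

Lemma amplE k n m (f : 'M[C]_n -> 'M[C]_m) X :
  ampl (k:=k) f X = \sum_i \sum_j Esel m i *m f (adjmx (Esel n i) *m X *m Esel n j) *m adjmx (Esel m j).
Proof.
by apply: eq_bigr => i _; apply: eq_bigr => j _; rewrite tens_delta blockmxE.
Qed.

Lemma conjEsel k m (i a b j : 'I_k) (Y : 'M[C]_m) :
  adjmx (Esel m i) *m (Esel m a *m Y *m adjmx (Esel m b)) *m Esel m j
  = ((a == i)%:R * (b == j)%:R) *: Y.
Proof.
rewrite !mulmxA -[_ *m adjmx (Esel m b) *m _]mulmxA !EselM.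
by rewrite -!scalemxAl mul1mx -scalemxAr mulmx1 scalerA eq_sym.
Qed.

Lemma blockmx_ampl k n m (f : 'M[C]_n -> 'M[C]_m) X i j :
  blockmx (ampl (k:=k) f X) i j = f (blockmx X i j).
Proof.
rewrite blockmxE amplE mulmx_sumr mulmx_suml.
under eq_bigr => a _ do rewrite mulmx_sumr mulmx_suml.
under eq_bigr => a _ do under eq_bigr => b _ do rewrite conjEsel -scalerA.
under eq_bigr => a _ do rewrite -scaler_sumr.
by under eq_bigr => a _ do rewrite sum_deltaZ; rewrite sum_deltaZ blockmxE.
Qed.

Lemma ampl_ext k n m (f g : 'M[C]_n -> 'M[C]_m) X :
  (forall A, f A = g A) -> ampl (k:=k) f X = ampl (k:=k) g X.
Proof. by move=> H; apply: eq_bigr => i _; apply: eq_bigr => j _; rewrite H. Qed.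

Lemma cp_ext n m (f g : 'M[C]_n -> 'M[C]_m) :
  (forall A, f A = g A) -> is_cp g -> is_cp f.
Proof. by move=> H cg k X pX; rewrite (ampl_ext X H); apply: cg. Qed.

Lemma ampl_comp k n m p (f : 'M[C]_m -> 'M[C]_p) (g : 'M[C]_n -> 'M[C]_m) X :
  ampl (k:=k) (fun A => f (g A)) X = ampl (k:=k) f (ampl (k:=k) g X).
Proof. by apply: eq_bigr => i _; apply: eq_bigr => j _; rewrite blockmx_ampl. Qed.

Lemma cp_comp n m p (f : 'M[C]_m -> 'M[C]_p) (g : 'M[C]_n -> 'M[C]_m) :
  is_cp f -> is_cp g -> is_cp (fun A => f (g A)).
Proof. by move=> cf cg k X pX; rewrite ampl_comp; apply/cf/cg. Qed.

Lemma cp_sum n m (L : finType) (F : L -> 'M[C]_n -> 'M[C]_m) :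
  (forall l, is_cp (F l)) -> is_cp (fun A => \sum_l F l A).
Proof.
move=> cF k X pX.
have -> : ampl (k:=k) (fun A => \sum_l F l A) X = \sum_l ampl (k:=k) (F l) X.
  rewrite amplE; under eq_bigr => i _ do under eq_bigr => j _ do rewrite mulmx_sumr mulmx_suml.
  under eq_bigr => i _ do rewrite exchange_big /=.
  rewrite exchange_big /=; apply: eq_bigr => l _; by rewrite amplE.
by apply: psd_sum => l; apply: cF.
Qed.

Lemma cp_add n m (f g : 'M[C]_n -> 'M[C]_m) :
  is_cp f -> is_cp g -> is_cp (fun A => f A + g A).
Proof.
move=> cf cg; apply: (@cp_ext _ _ _ (fun A => \sum_(b : bool) (if b then f A else g A))).
  by move=> A; rewrite big_bool.
by apply: cp_sum => -[].
Qed.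

Lemma cp_conj n m (K : 'M[C]_(m, n)) : is_cp (fun A => K *m A *m adjmx K).
Proof.
move=> k X pX.
pose W : 'M[C]_(k * m, k * n) := \sum_(i < k) Esel m i *m K *m adjmx (Esel n i).
have -> : ampl (k:=k) (fun A => K *m A *m adjmx K) X = W *m X *m adjmx W.
  rewrite amplE /W adjmx_sum mulmx_suml mulmx_suml.
  apply: eq_bigr => i _; rewrite mulmx_sumr; apply: eq_bigr => j _.
  by rewrite !adjmxM !adjmxK !mulmxA.
exact: psd_conj.
Qed.

Lemma cp_psd n m (f : 'M[C]_n -> 'M[C]_m) X : is_cp f -> psdmx X -> psdmx (f X).
Proof.
move=> cf pX.
pose E0 : 'M[C]_(1 * n, n) := Esel n (ord0 : 'I_1).
have e1 : f X = blockmx (ampl (k:=1) f (E0 *m X *m adjmx E0)) ord0 ord0.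
  by rewrite blockmx_ampl blockmxE conjEsel eqxx mulr1 scale1r.
rewrite e1 blockmxE; have := psd_conj (adjmx (Esel m (ord0 : 'I_1))) (cf 1 _ (psd_conj E0 pX)).
by rewrite adjmxK.
Qed.

End CP.


Section Maps.
Variable C : numClosedFieldType.

Definition Fsel m v (c : 'I_v) : 'M[C]_(m * v, m) :=
  \matrix_(p, a) (p == mxtens_index (a, c))%:R.

Lemma ptrace2_kraus m v (Y : 'M[C]_(m * v)) :
  ptrace2 Y = \sum_c adjmx (Fsel m c) *m Y *m Fsel m c.
Proof.
apply/matrixP=> a b; rewrite mxE summxE; apply: eq_bigr => c _.
rewrite mxE; under eq_bigr do rewrite [Fsel _ _ _ _]mxE; rewrite sum_deltar mxE.
by under eq_bigr do rewrite adjmxE mxE rmorph_nat; rewrite sum_deltal.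
Qed.

Lemma cp_ptrace2 m v : is_cp (fun Y : 'M[C]_(m * v) => ptrace2 Y).
Proof.
apply: (cp_ext (@ptrace2_kraus m v)); apply: cp_sum => c.
by apply: (cp_ext _ (cp_conj (adjmx (Fsel m c)))) => A; rewrite adjmxK.
Qed.

Definition Lsel m v (K : 'M[C]_v) (l : 'I_v) : 'M[C]_(m * v, m) :=
  \matrix_(p, a) (((mxtens_unindex p).1 == a)%:R * K (mxtens_unindex p).2 l).

Lemma LselYE m v p (K : 'M[C]_v) l (Y : 'M[C]_(m, p)) a c b :
  (Lsel m K l *m Y) (mxtens_index (a, c)) b = K c l * Y a b.
Proof.
rewrite mxE; under eq_bigr do rewrite mxE mxtens_indexK /= -mulrA eq_sym.
by rewrite sum_deltal.
Qed.

Lemma YLselE m v p (K : 'M[C]_v) l (Y : 'M[C]_(p, m)) a b d :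
  (Y *m adjmx (Lsel m K l)) a (mxtens_index (b, d)) = Y a b * (K d l)^*.
Proof.
rewrite mxE; under eq_bigr do rewrite adjmxE mxE mxtens_indexK /= rmorphM rmorph_nat mulrA eq_sym.
by rewrite -mulr_suml sum_deltar.
Qed.

Lemma tens_kraus m v (K : 'M[C]_v) (A : 'M[C]_m) :
  A *t (K *m adjmx K) = \sum_l Lsel m K l *m A *m adjmx (Lsel m K l).
Proof.
apply/matrixP=> p q.
case: (mxtens_indexP p) => a c; case: (mxtens_indexP q) => b d.
rewrite tensmxE summxE mxE mulr_sumr; apply: eq_bigr => l _.
by rewrite YLselE LselYE adjmxE mulrCA mulrA.
Qed.

Lemma cp_tens m v (xi : 'M[C]_v) : psdmx xi -> is_cp (fun A : 'M[C]_m => A *t xi).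
Proof.
move=> /psd_factor [K ->].
apply: (cp_ext (tens_kraus K)); apply: cp_sum => l; exact: cp_conj.
Qed.

Lemma tr_tens m v (A : 'M[C]_m) (X : 'M[C]_v) : \tr (A *t X) = \tr A * \tr X.
Proof.
rewrite /mxtrace sum_tens mulr_suml; apply: eq_bigr => a _.
by rewrite mulr_sumr; apply: eq_bigr => c _; rewrite tensmxE.
Qed.

Lemma tr_ptrace2 m v (Y : 'M[C]_(m * v)) : \tr (ptrace2 Y) = \tr Y.
Proof. by rewrite /mxtrace sum_tens; apply: eq_bigr => a _; rewrite mxE. Qed.

Lemma tr_ptrace1 m v (Y : 'M[C]_(m * v)) : \tr (ptrace1 Y) = \tr Y.
Proof.
rewrite /mxtrace sum_tens exchange_big /=; apply: eq_bigr => c _; by rewrite mxE.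
Qed.

Lemma ptrace1_tens m v (A : 'M[C]_m) (X : 'M[C]_v) : ptrace1 (A *t X) = \tr A *: X.
Proof.
apply/matrixP=> c d; rewrite !mxE mulr_suml; apply: eq_bigr => a _.
by rewrite tensmxE.
Qed.

Lemma ptrace2_tens m v (A : 'M[C]_m) (X : 'M[C]_v) : ptrace2 (A *t X) = \tr X *: A.
Proof.
apply/matrixP=> a b; rewrite !mxE mulr_suml; apply: eq_bigr => c _.
by rewrite tensmxE mulrC.
Qed.

Lemma ptrace2_lin m v a (Y Z : 'M[C]_(m * v)) :
  ptrace2 (a *: Y + Z) = a *: ptrace2 Y + ptrace2 Z.
Proof.
apply/matrixP=> i j; rewrite !mxE mulr_sumr -big_split /=.
by apply: eq_bigr => c _; rewrite !mxE.
Qed.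

Lemma tens_linl m v a (A B : 'M[C]_m) (X : 'M[C]_v) :
  (a *: A + B) *t X = a *: (A *t X) + B *t X.
Proof. by apply/matrixP=> p q; rewrite !mxE mulrDl mulrA. Qed.

End Maps.


Section Inst.
Variable C : numClosedFieldType.

Section Lin.
Variables (n m : nat) (f : 'M[C]_n -> 'M[C]_m).
Hypothesis lf : is_linear_map f.

Lemma lin0 : f 0 = 0.
Proof.
have := lf 1 0 0; rewrite scaler0 addr0 scale1r => e.
by apply: (@addrI _ (f 0)); rewrite addr0 -e.
Qed.

Lemma linD A B : f (A + B) = f A + f B.
Proof. by have := lf 1 A B; rewrite !scale1r. Qed.

Lemma linZ a A : f (a *: A) = a *: f A.
Proof. by have := lf a A 0; rewrite !addr0 lin0 addr0. Qed.

Lemma lin_sum (I : finType) (F : I -> 'M[C]_n) : f (\sum_i F i) = \sum_i f (F i).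
Proof. exact: (big_morph f linD lin0). Qed.

End Lin.

Lemma tr_sum n (I : finType) (F : I -> 'M[C]_n) : \tr (\sum_i F i) = \sum_i \tr (F i).
Proof. exact: (big_morph _ (@mxtraceD _ _) (mxtrace0 _ _)). Qed.

Lemma tr_le_sum (Om : finType) n m (F : Om -> 'M[C]_n -> 'M[C]_m) :
  (forall x, is_cp (F x)) -> (forall A, \tr (\sum_x F x A) = \tr A) ->
  forall x rho, psdmx rho -> \tr (F x rho) <= \tr rho.
Proof.
move=> cF sF x rho prho; rewrite -sF tr_sum (bigD1 x) //= lerDl.
by apply: sumr_ge0 => y _; apply/psd_tr_ge0/cp_psd.
Qed.

Lemma real_aux (a z : C) : 0 <= a -> (forall r, r \is Num.real -> 0 <= a + r * z) -> z = 0.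
Proof.
move=> a0 H.
have ar : a \is Num.real by apply: ger0_real.
have zr : z \is Num.real.
  have := H 1 (rpred1 _); rewrite mul1r => /ger0_real h.
  by have := rpredB h ar; rewrite addrC addKr.
apply/eqP; apply: contraT => nz.
have rr : - (a + 1) / z \is Num.real by rewrite rpredM ?rpredN ?rpredD ?rpred1 ?rpredV.
have := H _ rr; rewrite mulrAC -mulrA divff // mulr1 opprD addrA subrr add0r.
by rewrite ler0N1.
Qed.

Lemma scal_aux (a b c : C) : (forall t, 0 <= a + t^* * b + t * c) -> b = 0 /\ c = 0.
Proof.
move=> H.
have a0 : 0 <= a by have := H 0; rewrite rmorph0 !mul0r !addr0.
have e1 : b + c = 0.
  apply: (real_aux a0) => r rr; have := H r; rewrite conj_Creal // -addrA -mulrDr //.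
have e2 : 'i * (c - b) = 0.
  apply: (real_aux a0) => r rr; have := H ('i * r).
  have -> : ('i * r)^* = - ('i * r) by rewrite rmorphM /= (conj_Creal rr) conjCi mulNr.
  by have -> : a + - ('i * r) * b + 'i * r * c = a + r * ('i * (c - b)) by rewrite -addrA; congr (_ + _); rewrite mulrA [r * 'i]mulrC mulrBr mulNr addrC.
have e3 : c - b = 0.
  by move/eqP: e2; rewrite mulf_eq0 (negbTE (neq0Ci _)) /= => /eqP.
have eb : b = c by apply/eqP; rewrite eq_sym -subr_eq0 e3.
have b0 : b = 0.
  by move: e1; rewrite -eb -mulr2n => /eqP; rewrite mulrn_eq0 /= => /eqP.
by split; rewrite -?eb.
Qed.

Lemma lin_sand n m (F : 'M[C]_n -> 'M[C]_m) (L R : 'M[C]_n) :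
  is_linear_map F -> forall a A B,
  F (L *m (a *: A + B) *m R) = a *: F (L *m A *m R) + F (L *m B *m R).
Proof. by move=> lF a A B; rewrite mulmxDr mulmxDl -scalemxAr -scalemxAl lF. Qed.

Lemma support n m (F : 'M[C]_n -> 'M[C]_m) (B P : 'M[C]_n) :
  is_linear_map F -> (forall rho, psdmx rho -> psdmx (F rho)) ->
  (forall rho, psdmx rho -> \tr (F rho) <= \tr (B *m rho)) ->
  adjmx P = P -> B *m (1%:M - P) = 0 ->
  forall A, F A = F (P *m A *m P).
Proof.
move=> lF pF tF hP BQ.
set Q := 1%:M - P.
have hQ : adjmx Q = Q by rewrite /Q adjmxB adjmx1 hP.
have PQ1 : P + Q = 1%:M by rewrite /Q addrC subrK.
have {}BQ : B *m Q = 0 by [].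
clearbody Q.
have s1 : forall rho, psdmx rho -> F (Q *m rho *m Q) = 0.
  move=> rho prho.
  have pq : psdmx (Q *m rho *m Q) by rewrite -{2}hQ; apply: psd_conj.
  apply: psd_tr0; first exact: pF.
  apply/eqP; rewrite eq_le (psd_tr_ge0 (pF _ pq)) andbT.
  by have := tF _ pq; rewrite !mulmxA BQ !mul0mx mxtrace0.
have s2 : forall rho, psdmx rho -> F (P *m rho *m Q) = 0 /\ F (Q *m rho *m P) = 0.
  move=> rho prho.
  have key : forall w, quad (F (P *m rho *m Q)) w = 0 /\ quad (F (Q *m rho *m P)) w = 0.
    move=> w; apply: (@scal_aux (quad (F (P *m rho *m P)) w)) => t.
    have pt := pF _ (psd_conj (P + t *: Q) prho).
    have E : (P + t *: Q) *m rho *m adjmx (P + t *: Q) = P *m rho *m P + t^* *: (P *m rho *m Q)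
         + t *: (Q *m rho *m P) + (t * t^*) *: (Q *m rho *m Q).
      by rewrite adjmxD adjmxZ hP hQ !mulmxDl !mulmxDr -!scalemxAl -!scalemxAr !scalerA !addrA.
    move: pt; rewrite E !(linD lF) !(linZ lF) s1 // scaler0 addr0 => -[_ q].
    by have := q w; rewrite -/(quad _ _) !quadD !quadZ.
  by split; apply: quad_zero => w; have [] := key w.
have st : forall rho : 'M[C]_n, is_state rho -> psdmx rho by move=> rho [].
have z1 := span_states (lin_sand Q Q lF) (fun rho h => s1 rho (st rho h)).
have z2 := span_states (lin_sand P Q lF) (fun rho h => (s2 rho (st rho h)).1).
have z3 := span_states (lin_sand Q P lF) (fun rho h => (s2 rho (st rho h)).2).
move=> A; rewrite {1}(_ : A = (P + Q) *m A *m (P + Q)); last by rewrite PQ1 mul1mx mulmx1.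
by rewrite !mulmxDl !mulmxDr !(linD lF) z1 z2 z3 !addr0.
Qed.

End Inst.


Section Pinv.
Variable C : numClosedFieldType.
Variable n : nat.
Variable S : 'M[C]_n.
Hypothesis pS : psdmx S.

Definition pinvS := sfun S (fun x => x^-1).
Definition projS := sfun S (fun x => x * x^-1).

Lemma pinv_herm : adjmx pinvS = pinvS.
Proof.
rewrite /pinvS sfun_adj; apply: sfun_ext => // x x0.
by have xr := ger0_real x0; rewrite conj_Creal // rpredV.
Qed.

Lemma proj_herm : adjmx projS = projS.
Proof.
rewrite /projS sfun_adj; apply: sfun_ext => // x x0.
by have xr := ger0_real x0; rewrite conj_Creal // rpredM ?rpredV.
Qed.

Lemma S_pinv : S *m pinvS = projS.
Proof.
have -> : S *m pinvS = sfun S id *m pinvS by rewrite (sfun_id pS).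
by rewrite /pinvS sfunM.
Qed.

Lemma pinv_S : pinvS *m S = projS.
Proof.
have -> : pinvS *m S = pinvS *m sfun S id by rewrite (sfun_id pS).
by rewrite /pinvS sfunM; apply: sfun_ext => // x _; rewrite mulrC.
Qed.

Lemma S_proj : S *m projS = S.
Proof.
have -> : S *m projS = sfun S id *m projS by rewrite (sfun_id pS).
rewrite /projS sfunM; apply: sfun_idE => // x _.
by have [->|nz] := eqVneq x 0; rewrite ?mul0r // mulrA mulrK ?unitfE.
Qed.

Lemma proj_S : projS *m S = S.
Proof.
have -> : projS *m S = projS *m sfun S id by rewrite (sfun_id pS).
rewrite /projS sfunM; apply: sfun_idE => // x _.
by have [->|nz] := eqVneq x 0; rewrite ?mul0r // mulrC mulrA mulrK ?unitfE.
Qed.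

Lemma proj_proj : projS *m projS = projS.
Proof.
rewrite /projS sfunM; apply: sfun_ext => // x _.
by have [->|nz] := eqVneq x 0; rewrite ?mul0r // divff ?mulr1.
Qed.

End Pinv.


Section InstFacts.
Variable C : numClosedFieldType.
Variables (Om : finType) (n m : nat) (I : Om -> 'M[C]_n -> 'M[C]_m).
Hypothesis iI : is_instrument I.
Lemma inst_lin x : is_linear_map (I x). Proof. by move: iI; rewrite /is_instrument => -[]. Qed.
Lemma inst_cp x : is_cp (I x). Proof. by move: iI; rewrite /is_instrument => -[]. Qed.
Lemma inst_sum A : \tr (\sum_x I x A) = \tr A. Proof. by move: iI; rewrite /is_instrument => -[]. Qed.
End InstFacts.

Section Main.
Variable C : numClosedFieldType.
Variables (Om Lam : finType) (n m v : nat).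
Variables (I : Om -> 'M[C]_n -> 'M[C]_m) (B : Lam -> 'M[C]_n)
  (J : Lam -> 'M[C]_n -> 'M[C]_v) (sqrtB : Lam -> 'M[C]_n).
Hypothesis pB : is_povm B.
Hypothesis mp : is_measure_and_prepare B J.
Hypothesis sq : forall y, is_psd_sqrt (sqrtB y) (B y).

Lemma trSAS y A : \tr (sqrtB y *m A *m sqrtB y) = \tr (B y *m A).
Proof. by rewrite mxtrace_mulC mulmxA; case: (sq y) => _ ->. Qed.

Lemma conjS y A : sqrtB y *m A *m sqrtB y = sqrtB y *m A *m adjmx (sqrtB y).
Proof. by case: (sq y) => pS _; rewrite psd_herm. Qed.

Lemma post_compat : postprocessing I (luders sqrtB) -> compatible I J.
Proof.
case: mp => xi [sxi Jxi] [Rr [iR IR]].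
pose G (p : Om * Lam) (A : 'M[C]_n) := Rr p.2 p.1 (sqrtB p.2 *m A *m sqrtB p.2) *t xi p.2.
have cG : forall p, is_cp (G p).
  move=> [x y]; rewrite /G /=.
  have ct : is_cp (fun Y : 'M[C]_m => Y *t xi y) by apply: cp_tens; case: (sxi y).
  have cR : is_cp (Rr y x) by apply: inst_cp.
  have cS : is_cp (fun A : 'M[C]_n => sqrtB y *m A *m sqrtB y).
    by apply: (cp_ext (conjS y)); apply: cp_conj.
  exact: (cp_comp ct (cp_comp cR cS)).
have sG : forall A, \tr (\sum_p G p A) = \tr A.
  move=> A; rewrite tr_sum.
  have -> : \sum_p \tr (G p A) = \sum_(x : Om) \sum_(y : Lam) \tr (G (x, y) A).
    by rewrite [RHS]pair_big /=; apply: eq_bigr => -[x y].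
  rewrite exchange_big /=.
  have -> : \tr A = \tr (\sum_y B y *m A) by rewrite -mulmx_suml; case: pB => _ ->; rewrite mul1mx.
  rewrite tr_sum; apply: eq_bigr => y _.
  rewrite /G /=; under eq_bigr do rewrite tr_tens; case: (sxi y) => _ ->.
  under eq_bigr do rewrite mulr1.
  by rewrite -tr_sum inst_sum // trSAS.
exists G; split.
- split => //.
  + move=> [x y] a A A'; rewrite /G /=.
    by rewrite (lin_sand _ _ (inst_lin (iR y) x)) tens_linl.
  + exact: tr_le_sum.
- move=> rho srho y.
  rewrite /G /=; under eq_bigr do rewrite ptrace1_tens.
  by rewrite -scaler_suml -tr_sum inst_sum // trSAS Jxi.
- move=> rho srho x.
  rewrite /G /=; under eq_bigr do rewrite ptrace2_tens.
  rewrite IR; apply: eq_bigr => y _.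
  by case: (sxi y) => _ ->; rewrite scale1r.
Qed.

End Main.


Section Main2.
Variable C : numClosedFieldType.
Variables (Om Lam : finType) (n m v : nat).
Variables (I : Om -> 'M[C]_n -> 'M[C]_m) (B : Lam -> 'M[C]_n)
  (J : Lam -> 'M[C]_n -> 'M[C]_v) (sqrtB : Lam -> 'M[C]_n).
Hypothesis iI : is_instrument I.
Hypothesis pB : is_povm B.
Hypothesis mp : is_measure_and_prepare B J.
Hypothesis sq : forall y, is_psd_sqrt (sqrtB y) (B y).

Lemma compat_post : compatible I J -> postprocessing I (luders sqrtB).
Proof.
case: mp => xi [sxi Jxi] [G [iG GJ GI]].
have st : forall rho : 'M[C]_n, is_state rho -> psdmx rho by move=> rho [].
pose F x y A := ptrace2 (G (x, y) A).
have lF : forall x y, is_linear_map (F x y).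
  by move=> x y a A A'; rewrite /F (inst_lin iG) ptrace2_lin.
have cF : forall x y, is_cp (F x y).
  by move=> x y; apply: (cp_comp (@cp_ptrace2 _ m v)); apply: inst_cp.
have FI : forall x A, \sum_y F x y A = I x A.
  move=> x A; apply/eqP; rewrite -subr_eq0; apply/eqP; move: A; apply: span_states.
  - move=> a A A'; rewrite (inst_lin iI).
    under eq_bigr do rewrite lF; rewrite big_split /= -scaler_sumr.
    by rewrite scalerBr opprD addrACA.
  - by move=> rho srho; rewrite GI // subrr.
have FB : forall y A, \sum_x \tr (F x y A) = \tr (B y *m A).
  move=> y A; apply/eqP; rewrite -subr_eq0; apply/eqP; move: A.
  apply: (span_states (V := C^o)).
  - move=> a A A'.
    under eq_bigr do rewrite lF mxtraceD mxtraceZ.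
    rewrite big_split /= -mulr_sumr mulmxDr -scalemxAr mxtraceD mxtraceZ.
    by rewrite opprD addrACA -mulrBr.
  - move=> rho srho.
    under eq_bigr do rewrite tr_ptrace2 -tr_ptrace1.
    rewrite -tr_sum GJ // Jxi mxtraceZ; case: (sxi y) => _ ->.
    by rewrite mulr1 subrr.
clearbody F.
pose T y := pinvS (sqrtB y).
pose P y := projS (sqrtB y).
have pS : forall y, psdmx (sqrtB y) by move=> y; case: (sq y).
have SS : forall y, sqrtB y *m sqrtB y = B y by move=> y; case: (sq y).
have hT : forall y, adjmx (T y) = T y by move=> y; apply: pinv_herm.
have hP : forall y, adjmx (P y) = P y by move=> y; apply: proj_herm.
have hQ : forall y, adjmx (1%:M - P y) = 1%:M - P y by move=> y; rewrite adjmxB adjmx1 hP.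
have BQ : forall y, B y *m (1%:M - P y) = 0.
  by move=> y; rewrite -SS mulmxBr mulmx1 -mulmxA S_proj ?subrr.
have TS : forall y, T y *m sqrtB y = P y by move=> y; apply: pinv_S.
have ST : forall y, sqrtB y *m T y = P y by move=> y; apply: S_pinv.
have PS : forall y, P y *m sqrtB y = sqrtB y by move=> y; apply: proj_S.
have PP : forall y, P y *m P y = P y by move=> y; apply: proj_proj.
clearbody T P.
have tF : forall x y rho, psdmx rho -> \tr (F x y rho) <= \tr (B y *m rho).
  move=> x y rho prho; rewrite -FB (bigD1 x) //= lerDl.
  by apply: sumr_ge0 => x' _; apply/psd_tr_ge0/(cp_psd (cF x' y)).
have supp : forall x y A, F x y A = F x y (P y *m A *m P y).
  move=> x y; apply: (support (lF x y) (fun rho h => cp_psd (cF x y) h) (tF x y) (hP y) (BQ y)).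
pose Rr y x A := F x y (T y *m A *m T y) + I x ((1%:M - P y) *m A *m (1%:M - P y)).
have cR : forall y x, is_cp (Rr y x).
  move=> y x; apply: cp_add.
    apply: (cp_comp (cF x y)); apply: (cp_ext _ (cp_conj (T y))) => A; by rewrite hT.
  apply: (cp_comp (inst_cp iI x)); apply: (cp_ext _ (cp_conj (1%:M - P y))) => A; by rewrite hQ.
have sR : forall y A, \tr (\sum_x Rr y x A) = \tr A.
  move=> y A; rewrite tr_sum; under eq_bigr do rewrite mxtraceD.
  rewrite big_split /= FB -tr_sum inst_sum //.
  have TBT : T y *m B y *m T y = P y by rewrite -SS !mulmxA TS -mulmxA ST PP.
  set Q := 1%:M - P y.
  have QQ : Q *m Q = Q by rewrite /Q mulmxBl mul1mx mulmxBr mulmx1 PP subrr subr0.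
  have e1 : \tr (B y *m (T y *m A *m T y)) = \tr (A *m P y).
    by rewrite -TBT mxtrace_mulC -!mulmxA mxtrace_mulC -!mulmxA.
  have e2 : \tr (Q *m A *m Q) = \tr (A *m Q).
    by rewrite mxtrace_mulC mulmxA QQ mxtrace_mulC.
  by rewrite e1 e2 -mxtraceD -mulmxDr /Q addrC subrK mulmx1.
exists Rr; split.
- move=> y; split => //.
  + move=> x a A A'; rewrite /Rr (lin_sand _ _ (lF x y)) (lin_sand _ _ (inst_lin iI x)).
    by rewrite scalerDr addrACA.
  + exact: tr_le_sum.
- move=> x A; rewrite -FI; apply: eq_bigr => y _; rewrite /Rr /luders.
  have -> : T y *m (sqrtB y *m A *m sqrtB y) *m T y = P y *m A *m P y.
    by rewrite !mulmxA TS -[_ *m sqrtB y *m T y]mulmxA ST.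
  have -> : (1%:M - P y) *m (sqrtB y *m A *m sqrtB y) *m (1%:M - P y) = 0.
    by rewrite !mulmxA mulmxBl mul1mx PS subrr !mul0mx.
  by rewrite (lin0 (inst_lin iI x)) addr0 -supp.
Qed.

End Main2.

End Aux.

Local Open Scope complex_scope.

Theorem corollary5 (R : realType) (Om Lam : finType) (n m v : nat)
    (I : Om -> 'M[R[i]]_n -> 'M[R[i]]_m)
    (B : Lam -> 'M[R[i]]_n)
    (J : Lam -> 'M[R[i]]_n -> 'M[R[i]]_v)
    (sqrtB : Lam -> 'M[R[i]]_n) :
  is_instrument I ->
  is_povm B ->
  is_instrument J ->
  is_measure_and_prepare B J ->
  (forall y, is_psd_sqrt (sqrtB y) (B y)) ->
  (compatible I J <-> postprocessing I (luders sqrtB)).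
Proof.
move=> iI pB _ mp sq; split.
  exact: (Aux.compat_post iI mp sq).
exact: (Aux.post_compat pB mp sq).
Qed.
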